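(* With $B_1,B_2,B_3,\boldsymbol y,c$ as in the context, define $A_1=B_3-B_2^{\top}B_1^{-1}B_2$, $A_2=B_4-\frac1c\boldsymbol\alpha\boldsymbol\alpha^{\top}$ and $Y=\mathrm{diag}(\boldsymbol y)-\frac1c\boldsymbol y\boldsymbol y^{\top}$. Then: (a) $A_1$ is block diagonal with $N$ diagonal blocks, each of size $(m-1)\times(m-1)$; moreover $A_1$ is positive definite and strictly diagonally dominant. (b) $A_2=(\boldsymbol 1_N\boldsymbol 1_N^{\top})\otimes Y$, and $Y$ is positive definite and strictly diagonally dominant.
   Context: Let $N\ge 1$, $m\ge 2$, $m_1,\dots,m_N\ge 1$ be integers, $M=\sum_t m_t$, $M_2=N(m-1)$, $n_{col}=mM+m$. Notation: $\boldsymbol 1_k$ all-ones vector, $\boldsymbol 0_k$ zero vector, $I_k$ identity, $\otimes$ Kronecker product. For $t=1,\dots,N$ let $F_t=I_{m_t}\otimes\boldsymbol 1_m^{\top}$, $G'_t=\boldsymbol 1_{m_t}^{\top}\otimes[\boldsymbol 0_{m-1},\ I_{m-1}]$, and $H=[\boldsymbol 0_{m-1},\ -I_{m-1}]$. With columns partitioned into blocks of sizes $mm_1,\dots,mm_N,m$, let $\bar A\in\mathbb{R}^{(M+M_2+1)\times n_{col}}$ have block rows $[\mathrm{diag}(F_1,\dots,F_N),\ 0]$, $[\mathrm{diag}(G'_1,\dots,G'_N),\ \boldsymbol 1_N\otimes H]$, $[0,\dots,0,\ \boldsymbol 1_m^{\top}]$. Let $\boldsymbol d\in\mathbb{R}^{n_{col}}$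 have positive entries, $D=\mathrm{diag}(\boldsymbol d)$, $\boldsymbol y$ the vector of the last $m-1$ entries of $\boldsymbol d$, $c$ the sum of the last $m$ entries of $\boldsymbol d$, $B_4=(\boldsymbol 1_N\boldsymbol 1_N^{\top})\otimes\mathrm{diag}(\boldsymbol y)$, $\boldsymbol\alpha=-\boldsymbol 1_N\otimes\boldsymbol y$. Partition $\bar AD\bar A^{\top}$ into $3\times3$ blocks of row/column sizes $M,M_2,1$; let $B_1$ be the $(1,1)$ block, $B_2$ the $(1,2)$ block, and $B_3$ the $(2,2)$ block minus $B_4$. (It is known that $B_1,B_3$ are diagonal with positive diagonal, $B_2$ is block diagonal with blocks of size $m_t\times(m-1)$, the $(2,3)$ block is $\boldsymbol\alpha$, the $(1,3)$ block is $0$ and the $(3,3)$ entry is $c$.) *)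

(* Defs.v *)
From HB Require Import structures.
From mathcomp Require Import all_boot all_order all_algebra.
Set Implicit Arguments. Unset Strict Implicit. Unset Printing Implicit Defensive.
Import Order.TTheory GRing.Theory Num.Theory.
Local Open Scope ring_scope.

Lemma kron_div_lt (a b : nat) (i : 'I_(a * b)) : (i %/ b < a)%N.
Proof.
case: i; case: b => [|b] i Hi /=; first by rewrite muln0 in Hi.
by rewrite ltn_divLR.
Qed.

Lemma kron_mod_lt (a b : nat) (i : 'I_(a * b)) : (i %% b < b)%N.
Proof.
case: i; case: b => [|b] i Hi /=; first by rewrite muln0 in Hi.
by rewrite ltn_pmod.
Qed.

Lemma sum_const_ord (N k : nat) : (\sum_(t < N) k)%N = (N * k)%N.
Proof. by rewrite sum_nat_const card_ord. Qed.

Lemma succ_lt_of_lt_pred (m : nat) (j : 'I_(m - 1)) : (j.+1 < m)%N.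
Proof. by have := ltn_ord j; rewrite ltn_subRL addnC addn1. Qed.

(* ---------- Kronecker product (standard row-major ordering):
   (A ⊗ B)_{(i1*m2+i2),(j1*n2+j2)} = A_{i1 j1} * B_{i2 j2} ---------- *)
Definition kron {R : pzRingType} {m1 n1 m2 n2 : nat}
  (A : 'M[R]_(m1, n1)) (B : 'M[R]_(m2, n2)) : 'M[R]_(m1 * m2, n1 * n2) :=
  \matrix_(i, j)
    (A (Ordinal (kron_div_lt i)) (Ordinal (kron_div_lt j)) *
     B (Ordinal (kron_mod_lt i)) (Ordinal (kron_mod_lt j))).

(* all-ones matrix ( 1_k is ones k 1, 1_k^T is ones 1 k ) *)
Definition ones {R : pzRingType} (r c : nat) : 'M[R]_(r, c) := const_mx 1.

Definition bdiag {R : pzRingType} {N : nat} {p_ q_ : 'I_N -> nat}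
  (B_ : forall t, 'M[R]_(p_ t, q_ t)) : 'M[R]_(\sum_t p_ t, \sum_t q_ t) :=
  mxblock (fun j k => if j == k then conform_mx 0 (B_ j) else 0).

Definition posdef {R : realFieldType} {n : nat} (A : 'M[R]_n) : Prop :=
  A^T = A /\ forall x : 'cV[R]_n, x != 0 -> 0 < (x^T *m A *m x) 0 0.

Definition sdd {R : realFieldType} {n : nat} (A : 'M[R]_n) : Prop :=
  forall i : 'I_n, \sum_(j < n | j != i) `|A i j| < `|A i i|.

Section Data.
Variables (R : realFieldType) (N m : nat) (mt : 'I_N -> nat).

Definition Msum : nat := (\sum_(t < N) mt t)%N.
Definition Mtwo : nat := (N * (m - 1))%N.
Definition Scol : nat := (\sum_(t < N) (mt t * m))%N.

(* [0_{m-1}, I_{m-1}] *)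
Definition ZI : 'M[R]_(m - 1, m) := \matrix_(i, j) ((j : nat) == i.+1)%:R.
Definition Hmat : 'M[R]_(m - 1, m) := - ZI.

Definition Fblk (t : 'I_N) : 'M[R]_(mt t, mt t * m) :=
  castmx (muln1 (mt t), erefl) (kron (1%:M : 'M[R]_(mt t)) (ones 1 m)).
Definition Gblk (t : 'I_N) : 'M[R]_(m - 1, mt t * m) :=
  castmx (mul1n (m - 1)%N, erefl) (kron (ones 1 (mt t)) ZI).

Definition Abar : 'M[R]_(Msum + Mtwo + 1, Scol + m) :=
  col_mx
    (col_mx
       (row_mx (bdiag Fblk) 0)
       (row_mx (castmx (sum_const_ord N (m - 1)%N, erefl) (bdiag Gblk))
               (castmx (erefl, mul1n m) (kron (ones N 1) Hmat))))
    (row_mx 0 (ones 1 m)).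

Variable d : 'cV[R]_(Scol + m).

Definition Dmat : 'M[R]_(Scol + m) := diag_mx d^T.
Definition Pmat : 'M[R]_(Msum + Mtwo + 1) := Abar *m Dmat *m Abar^T.

Definition B1 : 'M[R]_Msum := ulsubmx (ulsubmx Pmat).
Definition B2 : 'M[R]_(Msum, Mtwo) := ursubmx (ulsubmx Pmat).
Definition P22 : 'M[R]_Mtwo := drsubmx (ulsubmx Pmat).

(* y = last m-1 entries of d ; c = sum of last m entries of d *)
Definition yvec : 'cV[R]_(m - 1) :=
  \col_j d (rshift Scol (Ordinal (succ_lt_of_lt_pred j))) 0.
Definition cc : R := \sum_(j < m) d (rshift Scol j) 0.

Definition B4 : 'M[R]_Mtwo := kron (ones N N) (diag_mx yvec^T).
Definition B3 : 'M[R]_Mtwo := P22 - B4.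
Definition alpha : 'M[R]_(Mtwo, 1 * 1) := - kron (ones N 1) yvec.

Definition A1 : 'M[R]_Mtwo := B3 - B2^T *m invmx B1 *m B2.
Definition A2 : 'M[R]_Mtwo := B4 - cc^-1 *: (alpha *m alpha^T).
Definition Ymat : 'M[R]_(m - 1) := diag_mx yvec^T - cc^-1 *: (yvec *m yvec^T).

End Data.

(* Main.v *)
Require Import Defs.
From HB Require Import structures.
From mathcomp Require Import all_boot all_order all_algebra.
Set Implicit Arguments. Unset Strict Implicit. Unset Printing Implicit Defensive.
Import Order.TTheory GRing.Theory Num.Theory.
Local Open Scope ring_scope.

Lemma sum_Rank (R : nmodType) (n : nat) (p_ : 'I_n -> nat)
  (F : 'I_(\sum_i p_ i) -> R) :
  \sum_s F s = \sum_t \sum_(a : 'I_(p_ t)) F (tagnat.Rank t a).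
Proof.
rewrite (reindex (@tagnat.rank n p_)); last exact: tagnat.rank_bij_on.
rewrite sig_big_dep /=.
by apply: eq_bigr => -[t a].
Qed.

Lemma bdiag_same (R : pzRingType) (N : nat) (p_ q_ : 'I_N -> nat)
  (B_ : forall t, 'M[R]_(p_ t, q_ t)) t (a : 'I_(p_ t)) (b : 'I_(q_ t)) :
  bdiag B_ (tagnat.Rank t a) (tagnat.Rank _ b) = B_ t a b.
Proof.
rewrite /bdiag /mxblock mxE.
move: (tagnat.Rank2K a) (tagnat.Rank2K b).
move: (tagnat.sig2 (tagnat.Rank t a)) (tagnat.sig2 (tagnat.Rank _ b)).
move: (tagnat.Rank1K a) (tagnat.Rank1K b).
move: (tagnat.sig1 (tagnat.Rank t a)) (tagnat.sig1 (tagnat.Rank _ b)).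
move=> u v eu ev; subst u v => a' b' -> ->.
by rewrite eqxx conform_mx_id !cast_ord_id.
Qed.

Lemma bdiag_diff (R : pzRingType) (N : nat) (p_ q_ : 'I_N -> nat)
  (B_ : forall t, 'M[R]_(p_ t, q_ t)) t u (a : 'I_(p_ t)) (b : 'I_(q_ u)) :
  t != u -> bdiag B_ (tagnat.Rank t a) (tagnat.Rank _ b) = 0.
Proof.
move=> tu; rewrite /bdiag /mxblock mxE.
have H : (tagnat.sig1 (tagnat.Rank t a) == tagnat.sig1 (tagnat.Rank u b)) = false.
  by rewrite !tagnat.Rank1K (negPf tu).
by rewrite H mxE.
Qed.

Definition rowF N m (mt : 'I_N -> nat) (t : 'I_N) (k : 'I_(mt t))
  : 'I_(Msum mt + Mtwo N m + 1) :=
  lshift 1 (lshift (Mtwo N m) (tagnat.Rank t k : 'I_(Msum mt))).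
Definition rowG N m (mt : 'I_N -> nat) (j : 'I_(Mtwo N m))
  : 'I_(Msum mt + Mtwo N m + 1) := lshift 1 (rshift (Msum mt) j).
Definition colS N m (mt : 'I_N -> nat) (t : 'I_N) (r : 'I_(mt t * m))
  : 'I_(Scol m mt + m) := lshift m (tagnat.Rank t r : 'I_(Scol m mt)).
Definition colL N m (mt : 'I_N -> nat) (l : 'I_m) : 'I_(Scol m mt + m) :=
  rshift (Scol m mt) l.

Arguments rowF {N} m mt t k. Arguments rowG {N} m mt j. Arguments colS {N} m mt t r. Arguments colL {N} m mt l.

Lemma Fblk_E (R : realFieldType) N m (mt : 'I_N -> nat) t (k : 'I_(mt t)) r :
  Fblk R m mt t k r = (k == (r %/ m)%N :> nat)%:R.
Proof.
rewrite /Fblk castmxE /kron !mxE /= mulr1.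
by rewrite -val_eqE /= divn1.
Qed.

Lemma AbarF (R : realFieldType) N m (mt : 'I_N -> nat) t k u r :
  Abar R m mt (rowF m mt t k) (colS m mt u r) = ((t == u) && (k == (r %/ m)%N :> nat))%:R.
Proof.
rewrite /Abar /rowF /colS !col_mxEu row_mxEl.
have [e|tu] := eqVneq t u; first by subst u; rewrite bdiag_same Fblk_E; case: eqP.
by rewrite bdiag_diff // (negPf tu).
Qed.

Definition kdiv a b (i : 'I_(a * b)) : 'I_a := Ordinal (kron_div_lt i).
Definition kmod a b (i : 'I_(a * b)) : 'I_b := Ordinal (kron_mod_lt i).
Arguments kdiv {a b} i. Arguments kmod {a b} i.

Lemma kpair_lt a b (x : 'I_a) (y : 'I_b) : (x * b + y < a * b)%N.
Proof.
case: x y => x Hx [y Hy] /=.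
apply: (@leq_trans (x * b + b)); first by rewrite ltn_add2l.
by rewrite addnC -mulSn leq_mul2r Hx orbT.
Qed.
Definition kpair a b (x : 'I_a) (y : 'I_b) : 'I_(a * b) := Ordinal (kpair_lt x y).

Lemma kpair_div a b (x : 'I_a) (y : 'I_b) : ((kpair x y) %/ b)%N = x.
Proof.
case: x y => x Hx [y Hy] /=.
have Hb : (0 < b)%N by apply: leq_ltn_trans Hy.
by rewrite divnMDl // divn_small ?addn0.
Qed.
Lemma kpair_mod a b (x : 'I_a) (y : 'I_b) : ((kpair x y) %% b)%N = y.
Proof. by case: x y => x Hx [y Hy] /=; rewrite modnMDl modn_small. Qed.

Lemma kdiv_kpair a b (x : 'I_a) (y : 'I_b) : kdiv (kpair x y) = x.
Proof. by apply: val_inj; rewrite /= kpair_div. Qed.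
Lemma kmod_kpair a b (x : 'I_a) (y : 'I_b) : kmod (kpair x y) = y.
Proof. by apply: val_inj; rewrite /= kpair_mod. Qed.
Lemma kpair_eta a b (r : 'I_(a * b)) : kpair (kdiv r) (kmod r) = r.
Proof. by apply: val_inj; rewrite /= -divn_eq. Qed.

Lemma sum_kron (R : nmodType) a b (F : 'I_(a * b) -> R) :
  \sum_r F r = \sum_(x < a) \sum_(y < b) F (kpair x y).
Proof.
rewrite pair_big /=.
rewrite (reindex (fun p : 'I_a * 'I_b => kpair p.1 p.2)) //=.
exists (fun r => (kdiv r, kmod r)) => [[x y] _|r _] /=.
  by rewrite kdiv_kpair kmod_kpair.
exact: kpair_eta.
Qed.

Lemma kronE (R : pzRingType) m1 n1 m2 n2 (A : 'M[R]_(m1, n1)) (B : 'M[R]_(m2, n2)) i j :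
  kron A B i j = A (kdiv i) (kdiv j) * B (kmod i) (kmod j).
Proof. by rewrite mxE. Qed.

Lemma sumD1z (R : nmodType) (I : finType) (i0 : I) (F : I -> R) :
  (forall i, i != i0 -> F i = 0) -> \sum_i F i = F i0.
Proof. by move=> H; rewrite (bigD1 i0) //= big1 ?addr0 // => i /H. Qed.

Lemma sum_cast (R : nmodType) p q (e : p = q) (F : 'I_q -> R) :
  \sum_(j < q) F j = \sum_(i < p) F (cast_ord e i).
Proof. by case: q / e F => F; apply: eq_bigr => i _; rewrite cast_ord_id. Qed.

Lemma sum_split_m (R : nmodType) m (Hm : (0 < m)%N) (f : 'I_m -> R) :
  \sum_(y < m) f y = f (Ordinal Hm) + \sum_(j0 < m - 1) f (Ordinal (succ_lt_of_lt_pred j0)).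
Proof.
case: m Hm f => // n Hm f; rewrite big_ord_recl.
congr (_ + _); first by congr f; apply: val_inj.
rewrite (sum_cast (esym (subn1 n.+1))).
by apply: eq_bigr => j _; congr f; apply: val_inj.
Qed.

Lemma Gblk_E (R : realFieldType) N m (mt : 'I_N -> nat) t (j0 : 'I_(m - 1)) r :
  Gblk R m mt t j0 r = ((r %% m)%N == j0.+1)%:R.
Proof.
rewrite /Gblk castmxE kronE /ones !mxE mul1r /=.
by rewrite (@modn_small j0).
Qed.

Lemma sum_const_lt N c (t : 'I_N) : (\sum_(k < N | (k < t)%N) c)%N = (t * c)%N.
Proof.
rewrite -(big_ord_widen_cond N xpredT (fun _ => c)) /=; last exact: ltnW.
by rewrite sum_const_ord.
Qed.

Lemma castG N m (j : 'I_(N * (m - 1))) :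
  cast_ord (esym (sum_const_ord N (m - 1))) j =
  @tagnat.Rank N (fun _ => (m - 1)%N) (kdiv j) (kmod j).
Proof.
apply: val_inj; rewrite [RHS]tagnat.RankEsum sum_const_lt /=.
by rewrite -divn_eq.
Qed.

Lemma AbarFL (R : realFieldType) N m (mt : 'I_N -> nat) t k l :
  Abar R m mt (rowF m mt t k) (colL m mt l) = 0.
Proof. by rewrite /Abar /rowF /colL !col_mxEu row_mxEr mxE. Qed.

Lemma AbarG (R : realFieldType) N m (mt : 'I_N -> nat) j u r :
  Abar R m mt (rowG m mt j) (colS m mt u r) =
  ((kdiv j == u) && ((r %% m)%N == (kmod j).+1))%:R.
Proof.
rewrite /Abar /rowG /colS col_mxEu col_mxEd row_mxEl castmxE castG cast_ord_id.
have [e|tu] := eqVneq (kdiv j) u.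
  by subst u; rewrite bdiag_same Gblk_E; case: eqP.
by rewrite bdiag_diff // (negPf tu).
Qed.

Lemma AbarGL (R : realFieldType) N m (mt : 'I_N -> nat) j l :
  Abar R m mt (rowG m mt j) (colL m mt l) = - ((l : nat) == (kmod j).+1)%:R.
Proof.
rewrite /Abar /rowG /colL col_mxEu col_mxEd row_mxEr castmxE kronE /ones mxE mul1r.
rewrite /Hmat mxE /ZI mxE /= modn_small //.
Qed.

Lemma Pmat_E (R : realFieldType) N m (mt : 'I_N -> nat) (d : 'cV[R]_(Scol m mt + m)) i i' :
  Pmat d i i' =
  \sum_u \sum_x \sum_y
     Abar R m mt i (colS m mt u (kpair x y)) * d (colS m mt u (kpair x y)) 0 *
     Abar R m mt i' (colS m mt u (kpair x y))
  + \sum_l Abar R m mt i (colL m mt l) * d (colL m mt l) 0 * Abar R m mt i' (colL m mt l).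
Proof.
rewrite /Pmat /Dmat mul_mx_diag !mxE big_split_ord /=.
congr (_ + _); last by apply: eq_bigr => l _; rewrite !mxE.
rewrite (@sum_Rank _ N (fun t => mt t * m)%N).
apply: eq_bigr => u _; rewrite sum_kron; apply: eq_bigr => x _.
by apply: eq_bigr => y _; rewrite !mxE.
Qed.

Definition dd (R : realFieldType) N m (mt : 'I_N -> nat) (d : 'cV[R]_(Scol m mt + m))
  (u : 'I_N) (x : 'I_(mt u)) (y : 'I_m) : R := d (colS m mt u (kpair x y)) 0.
Arguments dd {R N m mt} d u x y.
Definition succ_ord m (j0 : 'I_(m - 1)) : 'I_m := Ordinal (succ_lt_of_lt_pred j0).

Lemma B1_P (R : realFieldType) N m (mt : 'I_N -> nat) (d : 'cV[R]_(Scol m mt + m)) t k t' k' :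
  B1 d (tagnat.Rank t k) (tagnat.Rank t' k') = Pmat d (rowF m mt t k) (rowF m mt t' k').
Proof. by rewrite /B1 !mxE. Qed.
Lemma B2_P (R : realFieldType) N m (mt : 'I_N -> nat) (d : 'cV[R]_(Scol m mt + m)) t k j :
  B2 d (tagnat.Rank t k) j = Pmat d (rowF m mt t k) (rowG m mt j).
Proof. by rewrite /B2 !mxE. Qed.
Lemma P22_P (R : realFieldType) N m (mt : 'I_N -> nat) (d : 'cV[R]_(Scol m mt + m)) j j' :
  P22 d j j' = Pmat d (rowG m mt j) (rowG m mt j').
Proof. by rewrite /P22 !mxE. Qed.

Lemma B1_E (R : realFieldType) N m (mt : 'I_N -> nat) (d : 'cV[R]_(Scol m mt + m)) t k t' k' :
  B1 d (tagnat.Rank t k) (tagnat.Rank t' k') =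
  ((t == t') && (k == k' :> nat))%:R * \sum_y dd d t k y.
Proof.
rewrite B1_P Pmat_E [X in _ + X]big1 ?addr0; last by move=> l _; rewrite AbarFL !mul0r.
rewrite (sumD1z (i0 := t)); last first.
  move=> u ut; apply: big1 => x _; apply: big1 => y _.
  by rewrite AbarF eq_sym (negPf ut) andFb mulr0n !mul0r.
rewrite (sumD1z (i0 := k)); last first.
  move=> x xk; apply: big1 => y _.
  by rewrite AbarF kpair_div eqxx andTb val_eqE eq_sym (negPf xk) mulr0n !mul0r.
rewrite mulr_sumr; apply: eq_bigr => y _.
rewrite !AbarF !kpair_div !eqxx /= mul1r mulrC; congr (_ * _).
by rewrite (eq_sym t) (eq_sym (k : nat)).
Qed.

Lemma B2_E (R : realFieldType) N m (mt : 'I_N -> nat) (d : 'cV[R]_(Scol m mt + m)) t k j :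
  B2 d (tagnat.Rank t k) j = (kdiv j == t)%:R * dd d t k (succ_ord (kmod j)).
Proof.
rewrite B2_P Pmat_E [X in _ + X]big1 ?addr0; last by move=> l _; rewrite AbarFL !mul0r.
rewrite (sumD1z (i0 := t)); last first.
  move=> u ut; apply: big1 => x _; apply: big1 => y _.
  by rewrite AbarF eq_sym (negPf ut) andFb mulr0n !mul0r.
rewrite (sumD1z (i0 := k)); last first.
  move=> x xk; apply: big1 => y _.
  by rewrite AbarF kpair_div eqxx andTb val_eqE eq_sym (negPf xk) mulr0n !mul0r.
rewrite (sumD1z (i0 := succ_ord (kmod j))); last first.
  move=> y ys.
  rewrite AbarG kpair_mod.
  have -> : (y == (kmod j).+1 :> nat) = false.
    by apply/negbTE; apply: contra ys => /eqP e; apply/eqP/val_inj.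
  by rewrite andbF mulr0n mulr0.
rewrite AbarF AbarG kpair_div kpair_mod !eqxx /= andbT mul1r mulrC.
by [].
Qed.

Lemma B4_E (R : realFieldType) N m (mt : 'I_N -> nat) (d : 'cV[R]_(Scol m mt + m)) j j' :
  B4 d j j' = (kmod j == kmod j')%:R * d (colL m mt (succ_ord (kmod j))) 0.
Proof.
rewrite /B4 kronE /ones !mxE mul1r; case: eqP => _; by rewrite ?mulr1n ?mul1r ?mulr0n ?mul0r.
Qed.

Lemma B3_E (R : realFieldType) N m (mt : 'I_N -> nat) (d : 'cV[R]_(Scol m mt + m)) j j' :
  B3 d j j' = (j == j')%:R * \sum_x dd d (kdiv j) x (succ_ord (kmod j)).
Proof.
rewrite /B3 mxE P22_P Pmat_E mxE B4_E.
have -> : \sum_l Abar R m mt (rowG m mt j) (colL m mt l) * d (colL m mt l) 0 *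
    Abar R m mt (rowG m mt j') (colL m mt l) =
    (kmod j == kmod j')%:R * d (colL m mt (succ_ord (kmod j))) 0.
  rewrite (sumD1z (i0 := succ_ord (kmod j))); last first.
    move=> y ys; rewrite AbarGL.
    have -> : (y == (kmod j).+1 :> nat) = false.
      by apply/negbTE; apply: contra ys => /eqP e; apply/eqP/val_inj.
    by rewrite oppr0 !mul0r.
  rewrite !AbarGL /= eqxx eqSS mulrN !mulNr opprK mulrC mul1r.
  by [].
rewrite addrK.
have [e|ne] := eqVneq j j'.
  subst j'; rewrite mul1r.
  rewrite (sumD1z (i0 := kdiv j)); last first.
    move=> u ut; apply: big1 => x _; apply: big1 => y _.
    by rewrite AbarG eq_sym (negPf ut) andFb mulr0n !mul0r.
  apply: eq_bigr => x _.
  rewrite (sumD1z (i0 := succ_ord (kmod j))); last first.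
    move=> y ys; rewrite AbarG kpair_mod.
    have -> : (y == (kmod j).+1 :> nat) = false.
      by apply/negbTE; apply: contra ys => /eqP e; apply/eqP/val_inj.
    by rewrite andbF mulr0n !mul0r.
  by rewrite AbarG kpair_mod /= !eqxx /= mul1r mulr1.
rewrite mul0r; apply: big1 => u _; apply: big1 => x _; apply: big1 => y _.
rewrite !AbarG !kpair_mod.
case: (kdiv j =P u) => [e1|_]; last by rewrite mulr0n !mul0r.
case: (kdiv j' =P u) => [e3|_]; last by rewrite andFb mulr0n mulr0.
case: (y =P (kmod j).+1 :> nat) => [e2|_]; last by rewrite mulr0n !mul0r.
case: (y =P (kmod j').+1 :> nat) => [e4|_]; last by rewrite mulr0n mulr0.
exfalso; move/eqP: ne; apply.
rewrite -(kpair_eta j) -(kpair_eta j'); congr kpair; first by rewrite e1 e3.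
by apply: val_inj; apply/eq_add_S; rewrite -e2 -e4.
Qed.
From mathcomp Require Import ring lra.

Lemma pos_sum_one (R : realFieldType) (I : finType) (i0 : I) (F : I -> R) :
  (forall i, 0 <= F i) -> 0 < F i0 -> 0 < \sum_i F i.
Proof.
move=> H H0; rewrite (bigD1 i0) //=.
have : 0 <= \sum_(i | i != i0) F i by apply: sumr_ge0.
lra.
Qed.

Lemma swap_off (R : realFieldType) n (G : 'I_n -> 'I_n -> R) :
  \sum_i \sum_(j | j != i) G i j = \sum_i \sum_(j | j != i) G j i.
Proof.
under eq_bigr => i _ do rewrite big_mkcond.
rewrite exchange_big /=; apply: eq_bigr => i _.
by rewrite [RHS]big_mkcond; apply: eq_bigr => j _ /=; rewrite eq_sym.
Qed.

Lemma sum_lin (R : realFieldType) (I : finType) (a b c : I -> R) :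
  \sum_i (a i + (- b i / 2 - c i / 2)) = \sum_i a i - (\sum_i b i)/2 - (\sum_i c i)/2.
Proof. rewrite big_split /= sumrB -!mulr_suml sumrN. ring. Qed.

Lemma posdef_sdd (R : realFieldType) n (A : 'M[R]_n) :
  A^T = A -> (forall i, 0 < A i i) -> sdd A -> posdef A.
Proof.
move=> sym pos sd; split => // x x0.
pose y i := x i 0.
have Q : (x^T *m A *m x) 0 0 = \sum_i \sum_j y i * A i j * y j.
  rewrite mxE exchange_big /=; apply: eq_bigr => j _.
  rewrite mxE mulr_suml; apply: eq_bigr => i _; rewrite mxE.
  by [].
have Asym : forall i j, A j i = A i j by move=> i j; rewrite -{1}sym mxE.
have key : forall i j, - (`|A i j| * (y i ^+ 2 + y j ^+ 2)) / 2 <= y i * A i j * y j.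
  move=> i j; have [h|h] := lerP 0 (A i j).
    rewrite ger0_norm //.
    have : 0 <= A i j * (y i + y j) ^+ 2 by apply: mulr_ge0 => //; apply: sqr_ge0.
    nra.
  rewrite ltr0_norm //.
  have : 0 <= - A i j * (y i - y j) ^+ 2 by apply: mulr_ge0; [lra | apply: sqr_ge0].
  nra.
pose r i := \sum_(j | j != i) `|A i j|.
have step : \sum_i (A i i - r i) * y i ^+ 2 <= \sum_i \sum_j y i * A i j * y j.
  have E1 : \sum_i \sum_j y i * A i j * y j =
      \sum_i (A i i * y i ^+ 2 + \sum_(j | j != i) y i * A i j * y j).
    by apply: eq_bigr => i _; rewrite (bigD1 i) //=; congr (_ + _); rewrite expr2; ring.
  have E2 : \sum_i (A i i - r i) * y i ^+ 2 =
      \sum_i (A i i * y i ^+ 2 + \sum_(j | j != i) - (`|A i j| * (y i ^+ 2 + y j ^+ 2)) / 2).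
    have S : \sum_i \sum_(j | j != i) `|A i j| * y j ^+ 2 =
             \sum_i \sum_(j | j != i) `|A i j| * y i ^+ 2.
      rewrite swap_off; apply: eq_bigr => i _; apply: eq_bigr => j _.
      by rewrite Asym.
    have E3 : forall i, \sum_(j | j != i) - (`|A i j| * (y i ^+ 2 + y j ^+ 2)) / 2 =
        - (\sum_(j | j != i) `|A i j| * y i ^+ 2) / 2 - (\sum_(j | j != i) `|A i j| * y j ^+ 2) / 2.
      move=> i; rewrite !mulNr !mulr_suml -!sumrN -big_split /=.
      apply: eq_bigr => j _; ring.
    under [RHS]eq_bigr => i _ do rewrite E3.
    rewrite sum_lin S.
    have T : \sum_i \sum_(j | j != i) `|A i j| * y i ^+ 2 = \sum_i r i * y i ^+ 2.
      by apply: eq_bigr => i _; rewrite /r mulr_suml.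
    rewrite T.
    under eq_bigr => i _ do rewrite mulrBl.
    rewrite sumrB; move: (\sum_i A i i * y i ^+ 2) (\sum_i r i * y i ^+ 2) => a b; by field.
  rewrite E1 E2; apply: ler_sum => i _; rewrite lerD2l; apply: ler_sum => j _.
  exact: key.
rewrite Q; apply: (lt_le_trans _ step).
have [i xi] : exists i, y i != 0.
  apply/existsP; apply: contraR x0 => /existsPn H.
  apply/eqP/matrixP => i j; rewrite ord1 mxE; by have := H i; rewrite negbK => /eqP.
apply: (pos_sum_one (i0 := i)) => [k|].
  apply: mulr_ge0; last exact: sqr_ge0.
  by have := sd k; have := pos k; rewrite subr_ge0 => /ltW /ger0_norm -> /ltW.
apply: mulr_gt0; first by have := sd i; have := pos i; rewrite subr_gt0 => /ltW /ger0_norm ->.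
by rewrite lt0r sqrf_eq0 xi sqr_ge0.
Qed.

Definition Gmat (R : realFieldType) n p (B : 'M[R]_(p, n)) (b : 'I_p -> R) : 'M[R]_n :=
  \matrix_(j, j') ((j == j')%:R * \sum_i B i j - \sum_i B i j * B i j' / b i).

Lemma Gmat_props (R : realFieldType) n p (B : 'M[R]_(p, n)) (b : 'I_p -> R) :
  (forall i j, 0 <= B i j) -> (forall i, \sum_j B i j < b i) ->
  (forall j, exists i, 0 < B i j) ->
  (Gmat B b)^T = Gmat B b /\ (forall j, 0 < Gmat B b j j) /\ sdd (Gmat B b).
Proof.
move=> Bge0 Bsum Bex.
have bpos : forall i, 0 < b i.
  move=> i; apply: le_lt_trans (Bsum i); exact: sumr_ge0.
pose T j j' := \sum_i B i j * B i j' / b i.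
have Tge0 : forall j j', 0 <= T j j'.
  move=> j j'; apply: sumr_ge0 => i _; apply: divr_ge0; last exact: ltW.
  exact: mulr_ge0.
have offE : forall j j', j' != j -> `|Gmat B b j j'| = T j j'.
  move=> j j' ne; rewrite /Gmat mxE eq_sym (negPf ne) mul0r sub0r normrN.
  exact: (ger0_norm (Tge0 j j')).
pose D j := \sum_i B i j * (1 - (\sum_j' B i j') / b i).
have diffE : forall j, Gmat B b j j - \sum_(j' | j' != j) T j j' = D j.
  move=> j.
  have H1 : \sum_j' T j j' = \sum_i B i j * (\sum_j' B i j') / b i.
    rewrite /T exchange_big /=; apply: eq_bigr => i _.
    by rewrite mulr_sumr mulr_suml.
  have H2 : \sum_j' T j j' = T j j + \sum_(j' | j' != j) T j j' by rewrite (bigD1 j).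
  rewrite /Gmat mxE eqxx mul1r -/(T j j).
  have -> : \sum_i B i j - T j j - \sum_(j' | j' != j) T j j' =
            \sum_i B i j - \sum_j' T j j' by rewrite H2 opprD addrA.
  rewrite H1 /D -sumrB; apply: eq_bigr => i _.
  by rewrite mulrBr mulr1 mulrA.
have Dpos : forall j, 0 < D j.
  move=> j; have [i0 Hi0] := Bex j.
  have fac : forall i, 0 < 1 - (\sum_j' B i j') / b i.
    by move=> i; rewrite subr_gt0 ltr_pdivrMr // mul1r.
  apply: (pos_sum_one (i0 := i0)) => [i|].
    by apply: mulr_ge0 => //; apply: ltW.
  exact: mulr_gt0.
have offge0 : forall j, 0 <= \sum_(j' | j' != j) T j j'.
  by move=> j; apply: sumr_ge0.
have diagpos : forall j, 0 < Gmat B b j j.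
  move=> j; have := diffE j; have := Dpos j; have := offge0 j.
  move: (Gmat B b j j) (\sum_(j' | j' != j) T j j') (D j) => a c e; lra.
split.
  apply/matrixP => j j'; rewrite !mxE eq_sym; congr (_ - _).
    case: eqP => [->//|_]; by rewrite /= !mul0r.
  by apply: eq_bigr => i _; rewrite (mulrC (B i j)) .
split => // j.
rewrite (eq_bigr (fun j' => T j j')); last by move=> j' ne; rewrite offE.
rewrite ger0_norm; last exact: ltW.
have := diffE j; have := Dpos j.
move: (Gmat B b j j) (\sum_(j' | j' != j) T j j') (D j) => a c e; lra.
Qed.

Lemma sum_split_succ (R : nmodType) m (Hm : (0 < m)%N) (f : 'I_m -> R) :
  \sum_(y < m) f y = f (Ordinal Hm) + \sum_(j0 < m - 1) f (succ_ord j0).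
Proof. exact: sum_split_m. Qed.

Lemma B1_diag (R : realFieldType) N m (mt : 'I_N -> nat) (d : 'cV[R]_(Scol m mt + m)) i i' :
  B1 d i i' = (i == i')%:R * B1 d i i.
Proof.
rewrite -(tagnat.sig2K i) -(tagnat.sig2K i') !B1_E.
have E := tagnat.eq_Rank (tagnat.sig2 i) (tagnat.sig2 i').
rewrite (_ : (tagnat.Rank (tagnat.sig1 i) (tagnat.sig2 i) ==
   tagnat.Rank (tagnat.sig1 i') (tagnat.sig2 i')) =
   ((tagnat.sig1 i == tagnat.sig1 i') && (tagnat.sig2 i == tagnat.sig2 i' :> nat))); last exact: E.
by rewrite !eqxx /= mul1r.
Qed.

Lemma B1_pos (R : realFieldType) N m (mt : 'I_N -> nat) (d : 'cV[R]_(Scol m mt + m)) i :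
  (0 < m)%N -> (forall c, 0 < d c 0) -> 0 < B1 d i i.
Proof.
move=> Hm dpos; rewrite -(tagnat.sig2K i) B1_E !eqxx /= mul1r.
apply: (pos_sum_one (i0 := Ordinal Hm)) => [y|]; last exact: dpos.
exact/ltW/dpos.
Qed.

Lemma inv_diag (R : realFieldType) n (A : 'M[R]_n) (b : 'I_n -> R) :
  (forall i j, A i j = (i == j)%:R * b i) -> (forall i, b i != 0) ->
  invmx A = \matrix_(i, j) ((i == j)%:R / b i).
Proof.
move=> Ad nz; set X := \matrix_(i, j) _.
have H : A *m X = 1%:M.
  apply/matrixP => i i'; rewrite [LHS]mxE (sumD1z (i0 := i)).
    rewrite Ad eqxx mul1r !mxE mulrCA mulfV // mulr1; by [].
  by move=> l li; rewrite Ad eq_sym (negPf li) !mul0r.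
have [U _] := mulmx1_unit H.
by rewrite -[invmx _]mulmx1 -H mulmxA mulVmx // mul1mx.
Qed.

Lemma subE (R : realFieldType) p q (A B : 'M[R]_(p, q)) i j : (A - B) i j = A i j - B i j.
Proof. by rewrite !mxE. Qed.
Lemma mulE (R : realFieldType) p q r (A : 'M[R]_(p, q)) (B : 'M[R]_(q, r)) i j :
  (A *m B) i j = \sum_k A i k * B k j.
Proof. by rewrite !mxE. Qed.

Lemma sum_B2col (R : realFieldType) N m (mt : 'I_N -> nat) (d : 'cV[R]_(Scol m mt + m)) j :
  \sum_i B2 d i j = \sum_x dd d (kdiv j) x (succ_ord (kmod j)).
Proof.
rewrite (@sum_Rank _ N mt) (sumD1z (i0 := kdiv j)).
  by apply: eq_bigr => k _; rewrite B2_E eqxx mul1r.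
move=> t tn; apply: big1 => k _.
by rewrite B2_E eq_sym (negPf tn) mul0r.
Qed.

Lemma A1_G (R : realFieldType) N m (mt : 'I_N -> nat) (d : 'cV[R]_(Scol m mt + m)) :
  (forall i, B1 d i i != 0) -> A1 d = Gmat (B2 d) (fun i => B1 d i i).
Proof.
move=> nz; apply/matrixP => j j'.
rewrite /A1 (inv_diag (b := fun i => B1 d i i) (B1_diag d) nz).
rewrite subE mulE B3_E /Gmat [RHS]mxE sum_B2col; congr (_ - _).
apply: eq_bigr => i _; rewrite mulE (sumD1z (i0 := i)).
  rewrite !mxE eqxx mul1r; by rewrite mulrAC.
by move=> l li; rewrite !mxE (negPf li) mul0r mulr0.
Qed.

Lemma Ymat_G (R : realFieldType) N m (mt : 'I_N -> nat) (d : 'cV[R]_(Scol m mt + m)) :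
  Ymat d = Gmat (\matrix_(i < 1, j < m - 1) yvec d j 0) (fun _ => cc d).
Proof.
apply/matrixP => j j'; rewrite /Ymat /Gmat !mxE !big_ord1 !mxE.
by rewrite mulr_natl; congr (_ - _); rewrite mulrC.
Qed.

Lemma A2_E (R : realFieldType) N m (mt : 'I_N -> nat) (d : 'cV[R]_(Scol m mt + m)) :
  A2 d = kron (ones N N) (Ymat d).
Proof.
apply/matrixP => j j'; rewrite /A2 /Ymat /B4 /alpha !mxE !big_ord1 !mxE.
by rewrite !mul1r mulrNN.
Qed.

Theorem lemma3 (R : realFieldType) (N m : nat) (mt : 'I_N -> nat)
  (d : 'cV[R]_(Scol m mt + m)) :
  (0 < N)%N -> (2 <= m)%N -> (forall t, 0 < mt t)%N ->
  (forall i, 0 < d i 0) ->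
  (* (a) *)
  ((forall i j : 'I_(Mtwo N m), (i %/ (m - 1))%N != (j %/ (m - 1))%N ->
      A1 d i j = 0)
   /\ posdef (A1 d) /\ sdd (A1 d))
  /\
  (* (b) *)
  (A2 d = kron (ones N N) (Ymat d) /\ posdef (Ymat d) /\ sdd (Ymat d)).
Proof.
move=> Npos m2 mtpos dpos.
have Hm : (0 < m)%N by apply: ltnW.
have b1pos : forall i, 0 < B1 d i i by move=> i; exact: B1_pos.
have nz : forall i, B1 d i i != 0 by move=> i; rewrite gt_eqF.
rewrite (A1_G nz) A2_E (Ymat_G d).
split.
  have H1 : forall i j, 0 <= B2 d i j.
    move=> i j; rewrite -(tagnat.sig2K i) B2_E; apply: mulr_ge0 => //.
    exact/ltW/dpos.
  have H2 : forall i, \sum_j B2 d i j < B1 d i i.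
    suff H : forall t (k : 'I_(mt t)),
        \sum_j B2 d (tagnat.Rank t k) j < B1 d (tagnat.Rank t k) (tagnat.Rank t k).
      by move=> i; rewrite -(tagnat.sig2K i); apply: H.
    move=> t k; rewrite B1_E !eqxx mul1r (sum_split_succ Hm).
    rewrite (@sum_kron _ N (m - 1)) (sumD1z (i0 := t)); last first.
      move=> t' tt'; apply: big1 => j0 _.
      by rewrite B2_E kdiv_kpair (negPf tt') mul0r.
    have -> : \sum_(y < m - 1) B2 d (tagnat.Rank t k) (kpair t y) =
              \sum_(j0 < m - 1) dd d t k (succ_ord j0).
      by apply: eq_bigr => y _; rewrite B2_E kdiv_kpair kmod_kpair eqxx mul1r.
    have := dpos (colS m mt t (kpair k (Ordinal Hm))).
    rewrite -/(dd d t k (Ordinal Hm)).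
    move: (dd d t k (Ordinal Hm)) (\sum_(j0 < m - 1) dd d t k (succ_ord j0)) => a s.
    lra.
  have H3 : forall j, exists i, 0 < B2 d i j.
    move=> j; exists (tagnat.Rank (kdiv j) (Ordinal (mtpos (kdiv j)))).
    by rewrite B2_E eqxx mul1r; apply: dpos.
  have [sym [dg sd]] := Gmat_props H1 H2 H3.
  split; last by split => //; apply: posdef_sdd.
  move=> i j ne; rewrite /Gmat mxE.
  have -> : (i == j) = false.
    by apply/negbTE; apply: contra ne => /eqP ->.
  rewrite mul0r sub0r; apply/eqP; rewrite oppr_eq0; apply/eqP.
  apply: big1 => l _; rewrite -(tagnat.sig2K l) !B2_E.
  case: (kdiv i =P tagnat.sig1 l) => [e1|_]; last by rewrite !mul0r.
  case: (kdiv j =P tagnat.sig1 l) => [e2|_]; last by rewrite mul0r mulr0 mul0r.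
  by move: ne; rewrite -[(i %/ (m - 1))%N]/(nat_of_ord (kdiv i))
                       -[(j %/ (m - 1))%N]/(nat_of_ord (kdiv j)) e1 e2 eqxx.
split => //.
pose Y := \matrix_(i < 1, j < m - 1) yvec d j 0.
have H1 : forall i j, 0 <= Y i j by move=> i j; rewrite !mxE; apply/ltW/dpos.
have H2 : forall i, \sum_j Y i j < cc d.
  move=> i; rewrite /cc (sum_split_succ Hm).
  have -> : \sum_(j < m - 1) Y i j =
            \sum_(j0 < m - 1) d (rshift (Scol m mt) (succ_ord j0)) 0.
    by apply: eq_bigr => j _; rewrite !mxE.
  have := dpos (rshift (Scol m mt) (Ordinal Hm)).
  move: (d (rshift (Scol m mt) (Ordinal Hm)) 0)
        (\sum_(j0 < m - 1) d (rshift (Scol m mt) (succ_ord j0)) 0) => a s.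
  lra.
have H3 : forall j, exists i, 0 < Y i j by move=> j; exists ord0; rewrite !mxE; apply: dpos.
have [sym [dg sd]] := Gmat_props H1 H2 H3.
by split => //; apply: posdef_sdd.
Qed.
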